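(* Fix $T\ge1$, $N_s\ge1$ storage devices, $N\ge 1$ net-capacity-surplus profiles $(P_t(k))_{t=1}^T$, and initial states of charge $S_{i,0}\ge 0$. For parameters $\overline{S}_i\ge S_{i,0}$, $\overline{x}_i\ge 0$ ($i=1,\dots,N_s$), let $v_k$ be the optimal value of problem (P2) for profile $k$ and $\mathrm{EUE}=\frac1N\sum_{k=1}^N\big(\sum_t p_t^-(k)+v_k\big)$. Then (P2) is always feasible, and for any device $i$, if its qualified capacity is $\overline{S}_i$, or $\overline{x}_i$, or more generally the parameters $(\overline{S}_i,\overline{x}_i)$ move along a ray $(\overline{S}_i^0+a\theta,\overline{x}_i^0+b\theta)$, $\theta\ge0$, $a,b\ge0$, $(a,b)\ne(0,0)$, with all other parameters fixed, then EUE as a function of this parameter is continuous, piecewise linear, and non-increasing; in particular the MRI $=-\partial\mathrm{EUE}/\partial\mathrm{QC}$ of device $i$ is non-negative wherever it exists, regardless of the profiles.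
   Context: For real $P_t$ (net capacity surplus at hour $t$), $p_t^+=\max\{P_t,0\}$, $p_t^-=\max\{-P_t,0\}$. Problem (P2) (multiple storage devices under reliability dispatch, no cross-charging): minimize over $S_{i,t}$ ($i=1,\dots,N_s$, $t=1,\dots,T$) $$\sum_{t=1}^T\min\Big\{0,\sum_{i=1}^{N_s}(S_{i,t}-S_{i,t-1})\Big\}$$ subject to, for all $i,t$: $0\le S_{i,t}\le\overline{S}_i$ (multipliers $\lambda_{i,1t},\lambda_{i,2t}$); $-\overline{x}_i\le S_{i,t}-S_{i,t-1}\le\overline{x}_i$ (multipliers $\lambda_{i,3t},\lambda_{i,4t}$); $-p_t^-\le S_{i,t}-S_{i,t-1}\le p_t^+$ (multipliers $\lambda_{i,5t},\lambda_{i,6t}$); and for all $t$: $-p_t^-\le\sum_i(S_{i,t}-S_{i,t-1})\le p_t^+$ (multipliers $\lambda_{7t},\lambda_{8t}$). The $S_{i,0}$ are given constants. Profiles are equally likely. *)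

(* Defs.v *)
From HB Require Import structures.
From mathcomp Require Import all_boot all_order all_algebra.
From mathcomp Require Import all_classical all_reals all_analysis.
Set Implicit Arguments. Unset Strict Implicit. Unset Printing Implicit Defensive.
Import Order.TTheory GRing.Theory Num.Theory.
Import numFieldNormedType.Exports.
Local Open Scope classical_set_scope.
Local Open Scope ring_scope.

Section P2.
Variable R : realType.

Definition pplus (x : R) : R := Num.max x 0.
Definition pminus (x : R) : R := Num.max (- x) 0.

(* A schedule: s i t = S_{i,t}; only t = 0..T matter; s i 0 must be the
   given initial state S0 i.  Pt : nat -> R is the profile (P_t)_{t=1..T}. *)
Definition feasibleP2 (T Ns : nat) (S0 Sbar xbar : 'I_Ns -> R)
    (Pt : nat -> R) (s : 'I_Ns -> nat -> R) : Prop :=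
  (forall i, s i 0%N = S0 i) /\
  forall t : nat, (1 <= t <= T)%N ->
    (forall i : 'I_Ns,
        (0 <= s i t /\ s i t <= Sbar i) /\
        (- xbar i <= s i t - s i t.-1 /\ s i t - s i t.-1 <= xbar i) /\
        (- pminus (Pt t) <= s i t - s i t.-1 /\
         s i t - s i t.-1 <= pplus (Pt t))) /\
    - pminus (Pt t) <= \sum_(i < Ns) (s i t - s i t.-1) /\
    \sum_(i < Ns) (s i t - s i t.-1) <= pplus (Pt t).

Definition objP2 (T Ns : nat) (s : 'I_Ns -> nat -> R) : R :=
  \sum_(1 <= t < T.+1) Num.min 0 (\sum_(i < Ns) (s i t - s i t.-1)).

Definition optP2 (T Ns : nat) (S0 Sbar xbar : 'I_Ns -> R) (Pt : nat -> R) : R :=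
  inf [set objP2 T s | s in feasibleP2 T S0 Sbar xbar Pt].

Definition EUE (T Ns N : nat) (S0 Sbar xbar : 'I_Ns -> R)
    (P : 'I_N -> nat -> R) : R :=
  (N%:R)^-1 * \sum_(k < N)
     (\sum_(1 <= t < T.+1) pminus (P k t) + optP2 T S0 Sbar xbar (P k)).

Definition along (Ns : nat) (p0 : 'I_Ns -> R) (i : 'I_Ns) (c theta : R)
  : 'I_Ns -> R :=
  fun j => if j == i then p0 j + c * theta else p0 j.

(* f is piecewise linear (affine) on [0, +oo): finitely many breakpoints
   0 < b_1 < ... < b_m, and f is affine on each of [0,b_1], [b_1,b_2], ...,
   [b_m, +oo). *)
Definition piecewise_linear_nonneg (f : R -> R) : Prop :=
  exists bs : seq R,
    path Order.lt 0 bs /\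
    forall j : nat, (j <= size bs)%N ->
      exists c d : R, forall th : R,
        nth 0 (0 :: bs) j <= th ->
        ((j < size bs)%N -> th <= nth 0 (0 :: bs) j.+1) ->
        f th = c * th + d.

End P2.

(* Main.v *)
Require Import Defs.
From HB Require Import structures.
From mathcomp Require Import all_boot all_order all_algebra.
From mathcomp Require Import all_classical all_reals all_analysis.
From mathcomp Require Import ring lra.
From Stdlib Require List.
Import Order.TTheory GRing.Theory Num.Theory.
Import numFieldNormedType.Exports.
Local Open Scope classical_set_scope.
Local Open Scope ring_scope.

Section FM.
Set Implicit Arguments. Unset Strict Implicit.
Variable R : realType.
Variable V : eqType.

Record con := Con { ca : V -> R; cal : R; cbe : R; cga : R }.

Definition lhs (vs : seq V) (a : V -> R) (x : V -> R) : R := \sum_(w <- vs) a w * x w.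
Definition holds vs (c : con) (th z : R) x :=
  lhs vs (ca c) x + cal c * th + cbe c * z <= cga c.
Definition satL vs L th z x := forall c, List.In c L -> holds vs c th z x.

Definition scalec (k : R) c :=
  Con (fun w => k * ca c w) (k * cal c) (k * cbe c) (k * cga c).
Definition addc c d :=
  Con (fun w => ca c w + ca d w) (cal c + cal d) (cbe c + cbe d) (cga c + cga d).
Definition comb v p q := addc (scalec (- ca q v) p) (scalec (ca p v) q).
Definition FM v L :=
  List.filter (fun c => ca c v == 0) L ++
  List.flat_map (fun p => List.map (fun q => comb v p q)
                    (List.filter (fun c => ca c v < 0) L))
     (List.filter (fun c => 0 < ca c v) L).
Fixpoint FMall vs L := match vs with [::] => L | v :: vs' => FMall vs' (FM v L) end.
Definition upd (x : V -> R) v y := fun w => if w == v then y else x w.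

Lemma lhs_cons v vs a x : lhs (v :: vs) a x = a v * x v + lhs vs a x.
Proof. by rewrite /lhs big_cons. Qed.

Lemma lhs_nil a x : lhs [::] a x = 0.
Proof. by rewrite /lhs big_nil. Qed.

Lemma lhs_upd v vs a x y : v \notin vs -> lhs vs a (upd x v y) = lhs vs a x.
Proof.
move=> nv; apply: eq_big_seq => w wv; rewrite /upd.
by case: eqP => // ew; move: nv; rewrite -ew wv.
Qed.

Lemma lhs_add vs a b x : lhs vs (fun w => a w + b w) x = lhs vs a x + lhs vs b x.
Proof. by rewrite /lhs -big_split; apply: eq_bigr => w _; rewrite mulrDl. Qed.

Lemma lhs_scale vs k a x : lhs vs (fun w => k * a w) x = k * lhs vs a x.
Proof. by rewrite /lhs mulr_sumr; apply: eq_bigr => w _; rewrite mulrA. Qed.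

Lemma lhs_sum (I : Type) (r : seq I) vs (F : I -> V -> R) x :
  lhs vs (fun w => \sum_(j <- r) F j w) x = \sum_(j <- r) lhs vs (F j) x.
Proof.
rewrite /lhs exchange_big; apply: eq_bigr => w _; by rewrite mulr_suml.
Qed.

Lemma lhs_opp vs a x : lhs vs (fun w => - a w) x = - lhs vs a x.
Proof. by rewrite /lhs -sumrN; apply: eq_bigr => w _; rewrite mulNr. Qed.

Lemma lhs_sub vs a b x : lhs vs (fun w => a w - b w) x = lhs vs a x - lhs vs b x.
Proof. by rewrite (lhs_add vs a (fun w => - b w)) lhs_opp. Qed.

Lemma FM_fwd v vs L th z x : satL (v :: vs) L th z x -> satL vs (FM v L) th z x.
Proof.
move=> H c /List.in_app_iff [/List.filter_In [Hc /eqP H0]|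
  /List.in_flat_map [p [/List.filter_In [Hp pp]] /List.in_map_iff
     [q [<- /List.filter_In [Hq qn]]]]].
  by have := H c Hc; rewrite /holds lhs_cons H0 mul0r add0r.
have := H p Hp; have := H q Hq; rewrite /holds !lhs_cons /comb /addc /scalec /=.
rewrite lhs_add !lhs_scale.
move: pp qn; set pv := ca p v; set qv := ca q v => pp qn.
set Lp := lhs vs (ca p) x; set Lq := lhs vs (ca q) x => hq hp.
nra.
Qed.

Lemma interp0 (X : Type) (B : list X) (u : X -> R) :
  exists y, forall p, List.In p B -> y <= u p.
Proof.
elim: B => [|p0 B [y Hy]]; first by exists 0.
exists (Num.min (u p0) y) => p /= [<-|Hp]; rewrite ge_min ?lexx //.
by rewrite Hy ?orbT.
Qed.

Lemma interp (X : Type) (A B : list X) (l u : X -> R) :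
  (forall q p, List.In q A -> List.In p B -> l q <= u p) ->
  exists y, (forall q, List.In q A -> l q <= y) /\ (forall p, List.In p B -> y <= u p).
Proof.
elim: A => [|q0 A IH] H.
  by have [y Hy] := @interp0 _ B u; exists y; split.
have [|y [H1 H2]] := IH.
  by move=> q p Hq Hp; apply: H => //=; right.
exists (Num.max (l q0) y); split.
  by move=> q /= [<-|Hq]; rewrite le_max ?lexx // H1 ?orbT.
by move=> p Hp; rewrite ge_max H2 // andbT; apply: H => //=; left.
Qed.

Definition res vs c th z x := cga c - cal c * th - cbe c * z - lhs vs (ca c) x.

Lemma FM_bwd v vs L th z x : v \notin vs -> satL vs (FM v L) th z x ->
  exists y, satL (v :: vs) L th z (upd x v y).
Proof.
move=> nv H.
have [|y [H1 H2]] := @interp _ (List.filter (fun c => ca c v < 0) L)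
   (List.filter (fun c => 0 < ca c v) L)
   (fun c => res vs c th z x / ca c v) (fun c => res vs c th z x / ca c v).
  move=> q p Hq Hp.
  have Hc : List.In (comb v p q) (FM v L).
    apply/List.in_app_iff; right; apply/List.in_flat_map; exists p; split => //.
    by apply/List.in_map_iff; exists q.
  have := H _ Hc; rewrite /holds /comb /addc /scalec /= lhs_add !lhs_scale.
  move: Hq Hp => /List.filter_In [_ qn] /List.filter_In [_ pp].
  rewrite /res.
  set rp := (_ - _ - _ - lhs vs (ca p) x).
  set rq := (_ - _ - _ - lhs vs (ca q) x).
  move: pp qn; set pv := ca p v; set qv := ca q v => pp qn.
  have ep : rp = pv * (rp / pv) by rewrite mulrC divfK // gt_eqF.
  have eq : rq = qv * (rq / qv) by rewrite mulrC divfK // lt_eqF.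
  move: ep eq; set tp := rp / pv; set tq := rq / qv.
  rewrite /rp /rq => ep eq hc.
  have key : 0 <= pv * qv * (tq - tp).
    have -> : pv * qv * (tq - tp) = pv * (qv * tq) - qv * (pv * tp) by ring.
    rewrite -ep -eq; lra.
  have pq : pv * qv < 0 by rewrite pmulr_rlt0.
  by move: key; rewrite (nmulr_rge0 _ pq) subr_le0.
exists y => c Hc; rewrite /holds lhs_cons lhs_upd // /upd eqxx.
have [cn|cp|c0] := ltgtP (ca c v) 0.
- have := H1 c (proj2 (List.filter_In _ _ _) (conj Hc cn)).
  rewrite /res; set r := (_ - _ - _ - _).
  have e : r = ca c v * (r / ca c v) by rewrite mulrC divfK // lt_eqF.
  move: e; set t := r / ca c v; rewrite /r => e h; nra.
- have := H2 c (proj2 (List.filter_In _ _ _) (conj Hc cp)).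
  rewrite /res; set r := (_ - _ - _ - _).
  have e : r = ca c v * (r / ca c v) by rewrite mulrC divfK // gt_eqF.
  move: e; set t := r / ca c v; rewrite /r => e h; nra.
- have := H c (List.in_or_app _ _ _ (or_introl
     (proj2 (List.filter_In _ _ _) (conj Hc (introT eqP c0))))).
  by rewrite /holds c0 mul0r add0r.
Qed.

Lemma FMall_iff vs L th z : uniq vs ->
  (exists x, satL vs L th z x) <-> (exists x, satL [::] (FMall vs L) th z x).
Proof.
elim: vs L => [|v vs IH] L //= /andP [nv uv].
rewrite -IH //; split => [[x Hx]|[x Hx]].
  by exists x; apply: FM_fwd.
by have [y Hy] := @FM_bwd v vs L th z x nv Hx; exists (upd x v y).
Qed.

End FM.

Section MA.
Set Implicit Arguments. Unset Strict Implicit.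
Variable R : realType.

Definition aff (p : R * R) (th : R) := p.1 * th + p.2.
Definition MaxAff (f : R -> R) (l : seq (R * R)) :=
  (forall th, 0 <= th -> forall p, p \in l -> aff p th <= f th) /\
  (forall th, 0 <= th -> exists2 p, p \in l & f th = aff p th).
Definition MA f := exists l, MaxAff f l.

Lemma MA_ext f g : (forall th, 0 <= th -> f th = g th) -> MA f -> MA g.
Proof.
move=> e [l [H1 H2]]; exists l; split.
  by move=> th h p pl; rewrite -e //; apply: H1.
by move=> th h; rewrite -e //; apply: H2.
Qed.

Lemma MA_const c : MA (fun _ => c).
Proof.
exists [:: (0, c)]; split.
  by move=> th _ p; rewrite inE => /eqP ->; rewrite /aff /= mul0r add0r.
by move=> th _; exists (0, c); rewrite ?inE // /aff /= mul0r add0r.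
Qed.

Lemma MA_add f g : MA f -> MA g -> MA (fun th => f th + g th).
Proof.
move=> [l1 [A1 B1]] [l2 [A2 B2]].
exists [seq (p.1 + q.1, p.2 + q.2) | p <- l1, q <- l2]; split.
  move=> th h r /allpairsP [[p q] [/= pl ql ->]].
  rewrite /aff /=.
  have := A1 th h p pl; have := A2 th h q ql; rewrite /aff; lra.
move=> th h; have [p pl ep] := B1 th h; have [q ql eq] := B2 th h.
exists (p.1 + q.1, p.2 + q.2).
  exact: (allpairs_f (fun p q : R * R => (p.1 + q.1, p.2 + q.2))).
by rewrite ep eq /aff /=; ring.
Qed.

Lemma MA_scale k f : 0 <= k -> MA f -> MA (fun th => k * f th).
Proof.
move=> k0 [l [A B]]; exists [seq (k * p.1, k * p.2) | p <- l]; split.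
  move=> th h r /mapP [p pl ->]; rewrite /aff /=.
  have := A th h p pl; rewrite /aff => hp.
  have -> : k * p.1 * th + k * p.2 = k * (p.1 * th + p.2) by ring.
  exact: ler_wpM2l.
move=> th h; have [p pl ep] := B th h; exists (k * p.1, k * p.2).
  by apply/mapP; exists p.
by rewrite ep /aff /=; ring.
Qed.

Lemma MA_sum (I : Type) (r : seq I) (F : I -> R -> R) :
  (forall i, MA (F i)) -> MA (fun th => \sum_(i <- r) F i th).
Proof.
move=> HF; elim: r => [|i r IH].
  by apply: (MA_ext _ (MA_const 0)) => th _; rewrite big_nil.
apply: (MA_ext _ (MA_add (HF i) IH)) => th _; by rewrite big_cons.
Qed.

Lemma sum_abs_ge (l : seq (R * R)) p : p \in l -> `|p.1| <= \sum_(q <- l) `|q.1|.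
Proof.
elim: l => [//|q l IH]; rewrite inE big_cons => /orP [/eqP ->|pl].
  by rewrite lerDl sumr_ge0.
by rewrite (le_trans (IH pl)) // lerDr.
Qed.

Lemma MaxAff_lip f l th1 th2 : MaxAff f l -> 0 <= th1 -> 0 <= th2 ->
  f th2 - f th1 <= (\sum_(q <- l) `|q.1|) * `|th2 - th1|.
Proof.
move=> [A B] h1 h2; have [p pl ->] := B th2 h2.
have := A th1 h1 p pl; rewrite /aff => hp.
apply: (@le_trans _ _ (p.1 * (th2 - th1))); first lra.
apply: (le_trans (ler_norm _)); rewrite normrM.
by apply: ler_wpM2r => //; apply: sum_abs_ge.
Qed.

Lemma maxr_r' (x y : R) : x <= y -> Num.max x y = y. Proof. exact: max_r. Qed.
Lemma maxr_l' (x y : R) : y <= x -> Num.max x y = x. Proof. exact: max_l. Qed.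

Lemma max0_lip (a b : R) : `|Num.max a 0 - Num.max b 0| <= `|a - b|.
Proof.
have n1 := ler_norm (a - b).
have n2 : - (a - b) <= `|a - b| by rewrite -normrN ler_norm.
rewrite ler_norml.
have [ha|ha] := leP a 0; have [hb|hb] := leP b 0.
- apply/andP; split; lra.
- apply/andP; split; lra.
- apply/andP; split; lra.
- apply/andP; split; lra.
Qed.

End MA.

Section MA2.
Variable R : realType.

Lemma lipg_lem (f : R -> R) l (x y : R) : MaxAff f l ->
  `|f (Num.max x 0) - f (Num.max y 0)| <= (\sum_(q <- l) `|q.1|) * `|x - y|.
Proof.
move=> Hl.
have C0 : 0 <= \sum_(q <- l) `|q.1| :> R by apply: sumr_ge0 => q _.
have hx : 0 <= Num.max x 0 by rewrite le_max lexx orbT.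
have hy : 0 <= Num.max y 0 by rewrite le_max lexx orbT.
have l1 := MaxAff_lip Hl hy hx; have l2 := MaxAff_lip Hl hx hy.
have m1 := max0_lip x y; rewrite distrC in l2.
have m2 : (\sum_(q <- l) `|q.1|) * `|Num.max x 0 - Num.max y 0| <=
   (\sum_(q <- l) `|q.1|) * `|x - y| by apply: ler_wpM2l.
rewrite ler_norml; apply/andP; split; lra.
Qed.

Lemma MA_cont (f : R -> R) : MA f -> {within [set th : R | 0 <= th], continuous f}.
Proof.
move=> [l Hl]; pose C : R := \sum_(q <- l) `|q.1|.
have C0 : 0 <= C by apply: sumr_ge0 => q _.
pose g := fun th : R => f (Num.max th 0).
have lipg : forall x y : R, `|g x - g y| <= C * `|x - y|.
  by move=> x y; apply: lipg_lem.
have gc : continuous g.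
  move=> x; apply/cvgrPdist_lt => e e0.
  apply/nbhs_ballP; exists (e / (C + 1)) => /=.
    by apply: divr_gt0 => //; lra.
  move=> t; rewrite /ball /= => ht.
  have ht' : `|x - t| * (C + 1) < e by rewrite -ltr_pdivlMr; [exact: ht | lra].
  have := lipg x t; have := normr_ge0 (x - t); nra.
have gA : {within [set th : R | 0 <= th], continuous g} := continuous_subspaceT gc.
apply: (subspace_eq_continuous _ gA).
move=> th; rewrite inE /= => h; rewrite /g.
rewrite /from_subspace /=; have [h'|h'] := leP th 0; last by [].
by have -> : th = 0 by apply/eqP; rewrite eq_le h' h.
Qed.

Lemma nincr_derive_le0 (f : R -> R) x : 0 < x -> derivable f x 1 ->
  (forall a b, 0 <= a -> a <= b -> f b <= f a) -> derive1 f x <= 0.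
Proof.
move=> x0 df decrf.
apply: limr_le.
  under eq_fun; first (move=> h; rewrite -{2}(scaler1 h); over).
  exact: df.
near=> h.
have h0 : h != 0 by near: h; exact: nbhs_dnbhs_neq.
have hx : `|h| < x by near: h; apply: dnbhs0_lt.
have hx' : 0 <= h + x.
  have := ler_norm (- h); rewrite normrN; lra.
move: h0; rewrite neq_lt => /orP[h0|h0].
- rewrite nmulr_rle0 ?invr_lt0// subr_ge0; apply: decrf => //; lra.
- rewrite pmulr_rle0 ?invr_gt0// subr_le0; apply: decrf => //; lra.
Unshelve. all: end_near. Qed.

End MA2.

Section PL.
Variable R : realType.

Definition rt (p q : R * R) : R := - (p.2 - q.2) / (p.1 - q.1).

Lemma MA_pl (f : R -> R) : MA f -> piecewise_linear_nonneg f.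
Proof.
move=> [l [A B]].
pose bs := sort <=%R (undup [seq r <- [seq rt p q | p <- l, q <- l] | 0 < r]).
have bs_pos : forall r, r \in bs -> 0 < r.
  by move=> r; rewrite mem_sort mem_undup mem_filter => /andP [].
have bs_root : forall p q, p \in l -> q \in l -> 0 < rt p q -> rt p q \in bs.
  move=> p q pl ql h; rewrite mem_sort mem_undup mem_filter h /=.
  exact: (allpairs_f rt).
have path_bs : path <%R 0 bs.
  rewrite path_min_sorted; last by apply/allP => r /bs_pos.
  by rewrite lt_sorted_uniq_le sort_uniq undup_uniq sort_le_sorted.
have so : sorted <=%R (0 :: bs) := sub_path (fun x y (h : x < y) => ltW h) path_bs.
have slt : sorted <%R (0 :: bs) := path_bs.
have seg : forall j r, (j <= size bs)%N -> r \in bs ->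
    r <= nth 0 (0 :: bs) j \/ ((j < size bs)%N /\ nth 0 (0 :: bs) j.+1 <= r).
  move=> j r hj rb.
  have hk : (index r bs < size bs)%N by rewrite index_mem.
  have er : r = nth 0 (0 :: bs) (index r bs).+1 by rewrite /= nth_index.
  case: (leqP (index r bs).+1 j) => h.
    left; rewrite er; apply: (sorted_leq_nth le_trans lexx) => //;
      by rewrite inE /= ltnS.
  right; split; first by rewrite (leq_trans _ hk).
  rewrite er; apply: (sorted_leq_nth le_trans lexx) => //; rewrite ?inE /= ?ltnS //.
  by rewrite (leq_trans _ hk).
exists bs; split => // j hj.
set lo := nth 0 (0 :: bs) j.
set hi := nth 0 (0 :: bs) j.+1.
have lo0 : 0 <= lo.
  have := @sorted_leq_nth _ _ le_trans lexx 0 _ so 0%N j; apply => //.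
have lohi : (j < size bs)%N -> lo < hi.
  move=> hj'; apply: (sorted_ltn_nth lt_trans 0 slt) => //; rewrite inE /= ltnS //.
pose m := if (j < size bs)%N then (lo + hi) / 2 else lo + 1.
have lom : lo < m.
  rewrite /m; case: ifP => hj'; last lra.
  have := lohi hj'; lra.
have mhi : (j < size bs)%N -> m < hi.
  by move=> hj'; rewrite /m hj'; have := lohi hj'; lra.
have m0 : 0 <= m by lra.
have [p pl ep] := B m m0.
exists p.1, p.2 => th h1 h2.
have th0 : 0 <= th by lra.
have [q ql eq] := B th th0.
suff : aff q th <= aff p th.
  by have := A th th0 p pl; rewrite eq /aff; lra.
rewrite leNgt; apply/negP => hlt.
have hm := A m m0 q ql.
have gth : (p.1 - q.1) * th + (p.2 - q.2) < 0 by move: hlt; rewrite /aff; lra.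
have gm : 0 <= (p.1 - q.1) * m + (p.2 - q.2) by move: hm; rewrite ep /aff; lra.
move: gth gm; set c := p.1 - q.1; set d := p.2 - q.2 => gth gm.
have c0 : c != 0 by apply/eqP => c0; rewrite c0 in gth gm; lra.
have er : c * rt p q = - d by rewrite /rt -/c -/d mulrC divfK.
move: er; set r := rt p q => er.
have [rlo rhi] : lo < r /\ ((j < size bs)%N -> r < hi).
  have [cn|cp|] := ltgtP c 0; last by move/eqP: c0.
  - have r1 : th > r by nra.
    have r2 : m <= r by nra.
    split; first lra.
    by move=> hj'; have := h2 hj'; lra.
  - have r1 : th < r by nra.
    have r2 : r <= m by nra.
    split; first lra.
    by move=> hj'; have := mhi hj'; lra.
have rb : r \in bs by apply: bs_root => //; rewrite -/r; lra.
case: (seg j r hj rb) => [h|[hj' hr]]; first by move: h; rewrite -/lo; lra.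
by move: hr; rewrite -/hi; have := rhi hj'; lra.
Qed.

End PL.

Unset Implicit Arguments. Set Strict Implicit.

Lemma InP (X : eqType) (y : X) s : List.In y s <-> y \in s.
Proof.
elim: s => [//|a s IH] /=; rewrite inE; split.
  by move=> [->|/IH ->]; rewrite ?eqxx ?orbT.
by move=> /orP [/eqP ->|/IH]; [left|right].
Qed.

Section Sys.
Set Implicit Arguments.
Variable R : realType.
Variables (T Ns : nat) (S0 S0b xb sa sb : 'I_Ns -> R) (Pt : nat -> R).

Local Notation V := ('I_Ns * nat)%type.
Definition vars : seq V := [seq (i, t) | i <- enum 'I_Ns, t <- iota 0 T.+1].

Lemma vars_uniq : uniq vars.
Proof.
apply: allpairs_uniq; [exact: enum_uniq | exact: iota_uniq |].
by move=> [? ?] [? ?] _ _ [-> ->].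
Qed.

Lemma in_vars i t : (t <= T)%N -> (i, t) \in vars.
Proof.
move=> ht; apply: (allpairs_f (fun i t => (i, t))); first by rewrite mem_enum.
by rewrite mem_iota add0n ltnS.
Qed.

Definition e (w0 : V) : V -> R := fun w => (w == w0)%:R.

Lemma lhs_e vs (w0 : V) x : uniq vs -> w0 \in vs -> lhs vs (e w0) x = x w0.
Proof.
elim: vs => [//|v vs IH] /= /andP [nv uv]; rewrite inE lhs_cons /e.
case: (eqVneq v w0) => [<-|ne] /= H.
  rewrite ?eqxx mul1r.
  suff -> : lhs vs (fun w => (w == v)%:R) x = 0 by rewrite addr0.
  rewrite /lhs big1_seq // => w /andP [_ wv].
  by case: (eqVneq w v) => [ew|]; [move: nv; rewrite -ew wv | rewrite mul0r].
by rewrite mul0r add0r IH.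
Qed.

Definition Sbar th i := S0b i + sa i * th.
Definition xbar th i := xb i + sb i * th.
Definition dd i t : V -> R := fun w => e (i, t) w - e (i, t.-1) w.
Definition Dsum t : V -> R := fun w => \sum_(i < Ns) dd i t w.
Definition cf t : R := if Pt t <= 0 then 1 else 0.
Definition cobj : V -> R := fun w => \sum_(1 <= t < T.+1) cf t * Dsum t w.

Definition itc i t : seq (con R V) :=
  [:: Con (fun w => - e (i, t) w) 0 0 0;
      Con (e (i, t)) (- sa i) 0 (S0b i);
      Con (fun w => - dd i t w) (- sb i) 0 (xb i);
      Con (dd i t) (- sb i) 0 (xb i);
      Con (fun w => - dd i t w) 0 0 (pminus (Pt t));
      Con (dd i t) 0 0 (pplus (Pt t))].
Definition tc t : seq (con R V) :=
  Con (fun w => - Dsum t w) 0 0 (pminus (Pt t)) :: Con (Dsum t) 0 0 (pplus (Pt t))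
  :: List.flat_map (fun i => itc i t) (enum 'I_Ns).
Definition ic i : seq (con R V) :=
  [:: Con (e (i, 0%N)) 0 0 (S0 i); Con (fun w => - e (i, 0%N) w) 0 0 (- S0 i)].
Definition sys : seq (con R V) :=
  Con cobj 0 (-1) 0 :: List.flat_map ic (enum 'I_Ns) ++ List.flat_map tc (iota 1 T).

Section X.
Variable x : V -> R.

Lemma L_e i t : (t <= T)%N -> lhs vars (e (i, t)) x = x (i, t).
Proof. by move=> ht; rewrite lhs_e // ?vars_uniq ?in_vars. Qed.

Lemma L_d i t : (t <= T)%N -> lhs vars (dd i t) x = x (i, t) - x (i, t.-1).
Proof.
move=> ht; rewrite /dd lhs_sub !L_e //; exact: leq_trans (leq_pred t) ht.
Qed.

Lemma L_D t : (t <= T)%N -> lhs vars (Dsum t) x = \sum_(i < Ns) (x (i, t) - x (i, t.-1)).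
Proof. by move=> ht; rewrite /Dsum lhs_sum; apply: eq_bigr => i _; rewrite L_d. Qed.

Lemma L_obj : lhs vars cobj x =
  \sum_(1 <= t < T.+1) cf t * \sum_(i < Ns) (x (i, t) - x (i, t.-1)).
Proof.
rewrite /cobj lhs_sum; apply: eq_big_nat => t /andP [_ ht].
by rewrite lhs_scale L_D.
Qed.

Lemma obj_lin : (forall t, (1 <= t <= T)%N ->
   - pminus (Pt t) <= \sum_(i < Ns) (x (i, t) - x (i, t.-1)) <= pplus (Pt t)) ->
  objP2 T (fun i t => x (i, t)) =
  \sum_(1 <= t < T.+1) cf t * \sum_(i < Ns) (x (i, t) - x (i, t.-1)).
Proof.
move=> H; rewrite /objP2; apply: eq_big_nat => t ht.
have /andP [h1 h2] := H t ht.
rewrite /cf; case: ifP => hP.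
  have e0 : pplus (Pt t) = 0 by rewrite /pplus; exact: max_r.
  rewrite e0 in h2; rewrite mul1r; exact: min_r.
have e0 : pminus (Pt t) = 0.
  rewrite /pminus; apply: max_r; rewrite oppr_le0; apply: ltW.
  by rewrite ltNge hP.
rewrite e0 oppr0 in h1; rewrite mul0r; exact: min_l.
Qed.

Lemma sys_iff th z :
  satL vars sys th z x <->
  (feasibleP2 T S0 (Sbar th) (xbar th) Pt (fun i t => x (i, t)) /\
   objP2 T (fun i t => x (i, t)) <= z).
Proof.
have inF : forall i : 'I_Ns, List.In i (enum 'I_Ns).
  by move=> i; apply/InP; rewrite mem_enum.
have inI : forall t, (1 <= t <= T)%N -> List.In t (iota 1 T).
  by move=> t ht; apply/InP; rewrite mem_iota addnC addn1 ltnS.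
split.
- move=> H.
  have Hic : forall i c, List.In c (ic i) -> holds vars c th z x.
    move=> i c hc; apply: H; right; apply/List.in_app_iff; left.
    by apply/List.in_flat_map; exists i.
  have Htc : forall t, (1 <= t <= T)%N -> forall c, List.In c (tc t) -> holds vars c th z x.
    move=> t ht c hc; apply: H; right; apply/List.in_app_iff; right.
    by apply/List.in_flat_map; exists t; split => //; apply: inI.
  have Hitc : forall t i, (1 <= t <= T)%N -> forall c, List.In c (itc i t) -> holds vars c th z x.
    move=> t i ht c hc; apply: (Htc t) => //; right; right.
    by apply/List.in_flat_map; exists i.
  have Hobj := H _ (List.in_eq _ _).
  have feas : feasibleP2 T S0 (Sbar th) (xbar th) Pt (fun i t => x (i, t)).
    split.
      move=> i.
      have h1 := Hic i _ (or_introl erefl).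
      have h2 := Hic i _ (or_intror (or_introl erefl)).
      move: h1 h2; rewrite /holds /= ?lhs_opp !L_e //; lra.
    move=> t ht; have htT : (t <= T)%N by case/andP: ht.
    split.
      move=> i; have Hi := Hitc t i ht.
      have h1 := Hi _ (or_introl erefl).
      have h2 := Hi _ (or_intror (or_introl erefl)).
      have h3 := Hi _ (or_intror (or_intror (or_introl erefl))).
      have h4 := Hi _ (or_intror (or_intror (or_intror (or_introl erefl)))).
      have h5 := Hi _ (or_intror (or_intror (or_intror (or_intror (or_introl erefl))))).
      have h6 := Hi _ (or_intror (or_intror (or_intror (or_intror (or_intror (or_introl erefl)))))).
      move: h1 h2 h3 h4 h5 h6; rewrite /holds /= ?lhs_opp ?L_e ?L_d // /Sbar /xbar.
      move=> h1 h2 h3 h4 h5 h6; do !split; lra.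
    have h1 := Htc t ht _ (or_introl erefl).
    have h2 := Htc t ht _ (or_intror (or_introl erefl)).
    move: h1 h2; rewrite /holds /= ?lhs_opp ?L_D //; move=> h1 h2; split; lra.
  split => //.
  move: Hobj; rewrite /holds /= L_obj obj_lin; first lra.
  by move=> t ht; have [_ [h1 h2]] := feas.2 t ht; rewrite h1 h2.
- move=> [[H0 Ht] Hz] c.
  have HD : forall t, (1 <= t <= T)%N ->
     - pminus (Pt t) <= \sum_(i < Ns) (x (i, t) - x (i, t.-1)) <= pplus (Pt t).
    by move=> t ht; have [_ [h1 h2]] := Ht t ht; rewrite h1 h2.
  move=> /= [<-|/List.in_app_iff [/List.in_flat_map [i [_ hc]]|
                                  /List.in_flat_map [t [ht hc]]]].
  + rewrite /holds /= L_obj -obj_lin //; lra.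
  + move: hc => /= [<-|[<-|[]]]; rewrite /holds /= ?lhs_opp L_e // H0; lra.
  + move/InP: ht; rewrite mem_iota addnC addn1 ltnS => ht.
    have htT : (t <= T)%N by case/andP: ht.
    have [Hi [HD1 HD2]] := Ht t ht.
    move: hc => /= [<-|[<-|/List.in_flat_map [i [_ hc]]]].
    * rewrite /holds /= lhs_opp L_D //; lra.
    * rewrite /holds /= L_D //; lra.
    * have := Hi i; rewrite /Sbar /xbar.
      move: hc => /= [<-|[<-|[<-|[<-|[<-|[<-|[]]]]]]];
        rewrite /holds /= ?lhs_opp ?L_e ?L_d //; lra.
Qed.

End X.

Definition Bp : R := \sum_(1 <= t < T.+1) pminus (Pt t).
Definition Kl : seq (con R V) := FMall vars sys.
Definition Alist : seq (R * R) :=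
  (0, - Bp) :: List.map (fun c => (- cal c / cbe c, cga c / cbe c))
                 (List.filter (fun c => cbe c < 0) Kl).

Lemma pminus_ge0 (y : R) : 0 <= pminus y.
Proof. by rewrite /pminus le_max lexx orbT. Qed.
Lemma pplus_ge0 (y : R) : 0 <= pplus y.
Proof. by rewrite /pplus le_max lexx orbT. Qed.

Lemma obj_ge th s : feasibleP2 T S0 (Sbar th) (xbar th) Pt s -> - Bp <= objP2 T s.
Proof.
move=> [_ H]; rewrite /Bp /objP2 -sumrN; apply: ler_sum_nat => t ht.
have [_ [h1 _]] := H t ht.
by rewrite le_min h1 andbT oppr_le0 pminus_ge0.
Qed.

Lemma K_holds th s : feasibleP2 T S0 (Sbar th) (xbar th) Pt s ->
  forall c, List.In c Kl -> cal c * th + cbe c * objP2 T s <= cga c.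
Proof.
move=> fs.
have : exists x, satL vars sys th (objP2 T s) x.
  by exists (fun w => s w.1 w.2); apply/sys_iff; split.
move/(FMall_iff sys th (objP2 T s) vars_uniq) => [x Hx] c hc.
by have := Hx c hc; rewrite /holds lhs_nil add0r.
Qed.

Lemma in_Alist c : List.In c Kl -> cbe c < 0 ->
  (- cal c / cbe c, cga c / cbe c) \in Alist.
Proof.
move=> hc hb; rewrite inE; apply/orP; right; apply/InP; apply/List.in_map_iff.
by exists c; split => //; apply/List.filter_In.
Qed.

Lemma aff_c (th M : R) (c : con R V) : cbe c < 0 ->
  aff (- cal c / cbe c, cga c / cbe c) th <= M -> cal c * th + cbe c * M <= cga c.
Proof.
move=> hb; rewrite /aff /=.
have -> : - cal c / cbe c * th + cga c / cbe c = (cga c - cal c * th) / cbe c.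
  by rewrite mulrBl; ring.
have e : cga c - cal c * th = cbe c * ((cga c - cal c * th) / cbe c).
  by rewrite [RHS]mulrC divfK // lt_eqF.
move: e; set g := (_ / _) => e h; nra.
Qed.

Lemma c_aff (th M : R) (c : con R V) : cbe c < 0 ->
  cal c * th + cbe c * M <= cga c -> aff (- cal c / cbe c, cga c / cbe c) th <= M.
Proof.
move=> hb; rewrite /aff /=.
have -> : - cal c / cbe c * th + cga c / cbe c = (cga c - cal c * th) / cbe c.
  by rewrite mulrBl; ring.
have e : cga c - cal c * th = cbe c * ((cga c - cal c * th) / cbe c).
  by rewrite [RHS]mulrC divfK // lt_eqF.
move: e; set g := (_ / _) => e h; nra.
Qed.

Lemma A_lb th s : feasibleP2 T S0 (Sbar th) (xbar th) Pt s ->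
  forall p, p \in Alist -> aff p th <= objP2 T s.
Proof.
move=> fs p; rewrite inE => /orP [/eqP ->|/InP /List.in_map_iff [c [<- hc]]].
  by rewrite /aff /= mul0r add0r; exact: obj_ge fs.
move/List.filter_In: hc => [hc hb].
by apply: c_aff => //; apply: K_holds.
Qed.

Lemma list_argmax (th : R) (p0 : R * R) (l : seq (R * R)) :
  exists2 p, p \in p0 :: l & forall q, q \in p0 :: l -> aff q th <= aff p th.
Proof.
elim: l p0 => [|p1 l IH] p0.
  by exists p0; rewrite ?inE // => q; rewrite inE => /eqP ->.
have [pm pml pmax] := IH p1.
have [h|h] := leP (aff p0 th) (aff pm th).
  exists pm; first by rewrite inE pml orbT.
  by move=> q; rewrite inE => /orP [/eqP ->|/pmax].
exists p0; first by rewrite inE eqxx.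
move=> q; rewrite inE => /orP [/eqP ->|/pmax]; first by [].
by move=> hq; apply: (le_trans hq); apply: ltW.
Qed.

Section Hyps.
Hypothesis hS0 : forall i, 0 <= S0 i.
Hypothesis hS0b : forall i, S0 i <= S0b i.
Hypothesis hxb : forall i, 0 <= xb i.
Hypothesis hsa : forall i, 0 <= sa i.
Hypothesis hsb : forall i, 0 <= sb i.

Lemma feas0 th : 0 <= th -> feasibleP2 T S0 (Sbar th) (xbar th) Pt (fun i _ => S0 i).
Proof.
move=> th0; split => // t ht; split.
  move=> i; rewrite subrr /Sbar /xbar.
  have := hS0 i; have := hS0b i; have := mulr_ge0 (hsa i) th0.
  have := mulr_ge0 (hsb i) th0; have := hxb i.
  have := pminus_ge0 (Pt t); have := pplus_ge0 (Pt t).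
  move=> *; do !split; lra.
have -> : \sum_(i < Ns) (S0 i - S0 i) = 0 by rewrite big1 // => i _; rewrite subrr.
by have := pminus_ge0 (Pt t); have := pplus_ge0 (Pt t); move=> *; split; lra.
Qed.

Lemma feas_mono th1 th2 s : th1 <= th2 ->
  feasibleP2 T S0 (Sbar th1) (xbar th1) Pt s ->
  feasibleP2 T S0 (Sbar th2) (xbar th2) Pt s.
Proof.
move=> h [H0 H]; split => // t ht; have [Hi Hs] := H t ht; split => // i.
have := Hi i; rewrite /Sbar /xbar.
have := ler_wpM2l (hsa i) h; have := ler_wpM2l (hsb i) h.
move=> e1 e2 [[a1 a2] [[b1 b2] [c1 c2]]]; do !split; lra.
Qed.

Lemma opt_char (th : R) : 0 <= th ->
  exists s, feasibleP2 T S0 (Sbar th) (xbar th) Pt s /\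
   (forall s', feasibleP2 T S0 (Sbar th) (xbar th) Pt s' -> objP2 T s <= objP2 T s') /\
   exists2 p, p \in Alist & objP2 T s = aff p th.
Proof.
move=> th0.
have f0 := @feas0 th th0.
have [pm pmin pmax] := list_argmax th (0, - Bp)
  (List.map (fun c => (- cal c / cbe c, cga c / cbe c))
                 (List.filter (fun c => cbe c < 0) Kl)).
have Mz0 : aff pm th <= objP2 T (fun i _ => S0 i) by apply: A_lb.
have HK : satL [::] Kl th (aff pm th) (fun _ => 0).
  move=> c hc; rewrite /holds lhs_nil add0r.
  have h0 : cal c * th + cbe c * objP2 T (fun i _ => S0 i) <= cga c by apply: K_holds.
  case: (ltgtP (cbe c) 0) => hb.
  - by apply: aff_c => //; apply: pmax; apply: in_Alist.
  - have := ler_wpM2l (ltW hb) Mz0; lra.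
  - by move: h0; rewrite hb !mul0r.
have [x Hx] := (FMall_iff sys th (aff pm th) vars_uniq).2 (ex_intro _ _ HK).
have [fs hs] := (sys_iff x th (aff pm th)).1 Hx.
exists (fun i t => x (i, t)); split => //.
have hge : aff pm th <= objP2 T (fun i t => x (i, t)) by apply: A_lb.
have eqs : objP2 T (fun i t => x (i, t)) = aff pm th.
  by apply/eqP; rewrite eq_le hs hge.
split; last by exists pm.
by move=> s' fs'; rewrite eqs; by apply: A_lb.
Qed.

End Hyps.

End Sys.

Unset Implicit Arguments. Set Strict Implicit.

Lemma inf_min (R : realType) (X : Type) (F : set X) (g : X -> R) s :
  F s -> (forall s', F s' -> g s <= g s') -> inf [set g s | s in F] = g s.
Proof.
move=> Fs H; apply/eqP; rewrite eq_le; apply/andP; split.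
  have lbE : has_lbound [set g s | s in F].
    by exists (g s) => y [s' fs' <-]; apply: H.
  by apply: (ge_inf lbE); exists s.
apply: lb_le_inf; first by exists (g s); exists s.
by move=> y [s' fs' <-]; apply: H.
Qed.

Lemma along_E (R : realType) Ns (p0 : 'I_Ns -> R) i c th :
  along p0 i c th = (fun j => p0 j + (if j == i then c else 0) * th).
Proof.
apply: funext => j; rewrite /along; case: eqP => _ //.
by rewrite mul0r addr0.
Qed.

Theorem theorem2 (R : realType) (T Ns N : nat)
  (P : 'I_N -> nat -> R) (S0 Sbar0 xbar0 : 'I_Ns -> R) :
  (1 <= T)%N -> (1 <= Ns)%N -> (1 <= N)%N ->
  (forall i, 0 <= S0 i) ->
  (forall i, S0 i <= Sbar0 i) ->
  (forall i, 0 <= xbar0 i) ->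
  (* (P2) is always feasible *)
  (forall (Sbar xbar : 'I_Ns -> R) (Pt : nat -> R),
      (forall i, S0 i <= Sbar i) -> (forall i, 0 <= xbar i) ->
      exists s, feasibleP2 T S0 Sbar xbar Pt s) /\
  (* EUE along any admissible ray of one device's parameters *)
  (forall (i : 'I_Ns) (a b : R), 0 <= a -> 0 <= b -> (a != 0) || (b != 0) ->
    let f := fun theta : R =>
      EUE T S0 (along Sbar0 i a theta) (along xbar0 i b theta) P in
    {within [set theta : R | 0 <= theta], continuous f} /\
    piecewise_linear_nonneg f /\
    (forall th1 th2 : R, 0 <= th1 -> th1 <= th2 -> f th2 <= f th1) /\
    (* MRI = - dEUE/dQC is nonnegative wherever it exists *)
    (forall theta : R, 0 < theta -> derivable f theta 1 ->
       0 <= - (derive1 f theta))).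
Proof.
move=> _ _ _ hS0 hS0b hxb0; split.
  move=> Sb xb Pt hSb hxb; exists (fun i _ => S0 i); split => // t ht; split.
    move=> i; rewrite subrr.
    have := hS0 i; have := hSb i; have := hxb i.
    have := @pminus_ge0 R (Pt t); have := @pplus_ge0 R (Pt t).
    move=> *; do !split; lra.
  have -> : \sum_(i < Ns) (S0 i - S0 i) = 0 by rewrite big1 // => i _; rewrite subrr.
  by have := @pminus_ge0 R (Pt t); have := @pplus_ge0 R (Pt t); move=> *; split; lra.
move=> i a b ha hb _ f.
pose sa := fun j : 'I_Ns => if j == i then a else 0.
pose sb := fun j : 'I_Ns => if j == i then b else 0.
have hsa : forall j, 0 <= sa j by move=> j; rewrite /sa; case: ifP.
have hsb : forall j, 0 <= sb j by move=> j; rewrite /sb; case: ifP.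
pose v k th := optP2 T S0 (Sbar R Sbar0 sa th) (xbar R xbar0 sb th) (P k).
have fE : forall th, f th = N%:R^-1 *
    \sum_(k < N) (\sum_(1 <= t < T.+1) pminus (P k t) + v k th).
  by move=> th; rewrite /f /EUE !along_E.
have vE : forall k th, 0 <= th -> exists s,
   feasibleP2 T S0 (Sbar R Sbar0 sa th) (xbar R xbar0 sb th) (P k) s /\
   v k th = objP2 T s /\
   (forall s', feasibleP2 T S0 (Sbar R Sbar0 sa th) (xbar R xbar0 sb th) (P k) s' ->
      objP2 T s <= objP2 T s') /\
   exists2 p, p \in Alist R T S0 Sbar0 xbar0 sa sb (P k) & objP2 T s = aff p th.
  move=> k th th0.
  have [s [fs [smin sp]]] := opt_char R T S0 Sbar0 xbar0 sa sb (P k) hS0 hS0b hxb0 hsa hsb th th0.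
  exists s; split => //; split => //.
  by rewrite /v /optP2; apply: inf_min.
have vMA : forall k, MA (v k).
  move=> k; exists (Alist R T S0 Sbar0 xbar0 sa sb (P k)); split.
    move=> th th0 p pl; have [s [fs [-> _]]] := vE k th th0.
    exact: A_lb fs p pl.
  by move=> th th0; have [s [fs [-> [_ sp]]]] := vE k th th0.
have vmono : forall k th1 th2, 0 <= th1 -> th1 <= th2 -> v k th2 <= v k th1.
  move=> k th1 th2 h1 h12.
  have [s1 [fs1 [-> _]]] := vE k th1 h1.
  have [s2 [fs2 [-> [smin _]]]] := vE k th2 (le_trans h1 h12).
  by apply: smin; apply: (feas_mono hsa hsb th2 h12 fs1).
have fMA : MA f.
  apply: (MA_ext (f := fun th => N%:R^-1 *
     \sum_(k < N) (\sum_(1 <= t < T.+1) pminus (P k t) + v k th))).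
    by move=> th _; rewrite fE.
  apply: MA_scale; first by rewrite invr_ge0 ler0n.
  apply: MA_sum => k; apply: MA_add => //; exact: MA_const.
have fmono : forall th1 th2 : R, 0 <= th1 -> th1 <= th2 -> f th2 <= f th1.
  move=> th1 th2 h1 h12; rewrite !fE; apply: ler_wpM2l; first by rewrite invr_ge0 ler0n.
  by apply: ler_sum => k _; rewrite lerD2l; apply: vmono.
split; first exact: MA_cont.
split; first exact: MA_pl.
split; first exact: fmono.
move=> th th0 df; rewrite oppr_ge0.
by apply: nincr_derive_le0 => // x y hx hxy; apply: fmono.
Qed.
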